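(* Let $G$ be a graph with an assignment $g\colon V(G)\to\mathbb{N}$ (positive integers), and let $v\in V(G)$. Let $G':=G-v$ and let $g'\colon V(G')\to\mathbb{N}$ be such that $g'(x)=g(x)$ for every $x\in V(G)\setminus(\{v\}\cup N_G(v))$. If for some integer $q>\mathrm{HG}_{g'}(G')$ we have \[\frac{g(v)}{q}+\sum_{w\in N_G(v)}\frac{g(w)}{g'(w)+1}<1,\] then $q>\mathrm{HG}_g(G)$.
   Context: Multiple-guess hat game: for a graph $G$, an assignment $g\colon V(G)\to\mathbb{N}$ of positive integers and $q$ colours, a strategy is a family $(f_v)_{v\in V(G)}$ where $f_v\colon[q]^{N_G(v)}\to\binom{[q]}{\le g(v)}$ assigns to each colouring of the neighbourhood of $v$ a set of at most $g(v)$ colours. The strategy is winning if for every colouring $c\colon V(G)\to[q]$ there is $v\in V(G)$ with $c(v)\in f_v((c(w))_{w\in N_G(v)})$. $\mathrm{HG}_g(G)$ is the largest $q$ for which a winning strategy exists. *)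

(* Defs.v *)
From mathcomp Require Import all_boot all_order all_algebra.
Set Implicit Arguments. Unset Strict Implicit. Unset Printing Implicit Defensive.

(* A (finite simple) graph is a symmetric irreflexive relation e on a finType T.
   A strategy assigns to every vertex x a function f x : colourings -> {set 'I_q}
   which depends only on the colours of the neighbours of x (this is exactly a
   function [q]^{N(x)} -> subsets of [q]), with #|f x c| <= g x. *)

Definition strategy_local (T : finType) (e : rel T) (q : nat)
  (f : {ffun T -> {ffun {ffun T -> 'I_q} -> {set 'I_q}}}) : bool :=
  [forall x, forall c1 : {ffun T -> 'I_q}, forall c2 : {ffun T -> 'I_q},
     [forall w, e x w ==> (c1 w == c2 w)] ==> (f x c1 == f x c2)].

Definition strategy_bounded (T : finType) (g : T -> nat) (q : nat)
  (f : {ffun T -> {ffun {ffun T -> 'I_q} -> {set 'I_q}}}) : bool :=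
  [forall x, forall c : {ffun T -> 'I_q}, #|f x c| <= g x].

Definition strategy_wins (T : finType) (q : nat)
  (f : {ffun T -> {ffun {ffun T -> 'I_q} -> {set 'I_q}}}) : bool :=
  [forall c : {ffun T -> 'I_q}, exists x, c x \in f x c].

Definition has_winning (T : finType) (e : rel T) (g : T -> nat) (q : nat) : bool :=
  [exists f : {ffun T -> {ffun {ffun T -> 'I_q} -> {set 'I_q}}},
     [&& strategy_local e f, strategy_bounded g f & strategy_wins f]].

(* Any winning q satisfies
   q <= \sum_x g x (union bound: vertex x guesses right on a fraction <= g x / q
   of the colourings), so the maximum may be taken over q <= \sum_x g x. *)
Definition HG (T : finType) (e : rel T) (g : T -> nat) : nat :=
  \max_(q < (\sum_(x : T) g x).+1 | has_winning e g q) q.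

Notation del_vertex v := {x | x != v}.
Definition del_rel (T : finType) (e : rel T) (v : T) : rel (del_vertex v) :=
  fun x y => e (val x) (val y).
Arguments del_rel {T} e v.

(* Main.v *)
Require Import Defs.
From mathcomp Require Import all_boot all_order all_algebra.
From mathcomp Require Import zify ring lra.
Import Order.TTheory GRing.Theory Num.Theory.

Section Aux.
Variables (T : finType) (e : rel T) (q : nat).
Implicit Types (f : {ffun T -> {ffun {ffun T -> 'I_q} -> {set 'I_q}}}).

Lemma localP f : strategy_local e f -> forall x (c1 c2 : {ffun T -> 'I_q}),
  (forall w, e x w -> c1 w = c2 w) -> f x c1 = f x c2.
Proof.
move=> /forallP H x c1 c2 Hc; move: (H x) => /forallP /(_ c1) /forallP /(_ c2) /implyP.
move=> H2; apply/eqP/H2; apply/forallP => w; apply/implyP => /Hc ->; exact: eqxx.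
Qed.

Lemma boundedP g f : strategy_bounded g f -> forall x (c : {ffun T -> 'I_q}), #|f x c| <= g x.
Proof. by move=> /forallP H x c; move: (H x) => /forallP. Qed.

Lemma winsP f : strategy_wins f -> forall c : {ffun T -> 'I_q}, exists x, c x \in f x c.
Proof. by move=> /forallP H c; move: (H c) => /existsP. Qed.

Definition upd (c : {ffun T -> 'I_q}) x a : {ffun T -> 'I_q} :=
  [ffun y => if y == x then a else c y].

Lemma card_sum (A : {set 'I_q}) : #|A| = \sum_(a : 'I_q) (a \in A).
Proof. by rewrite -sum1_card big_mkcond. Qed.

Lemma ub g f : irreflexive e -> 0 < q -> strategy_local e f ->
  strategy_bounded g f -> strategy_wins f -> q <= \sum_x g x.
Proof.
move=> irr q0 /localP loc /boundedP bnd /winsP win.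
pose C := {ffun T -> 'I_q}.
have key x : q * \sum_(c : C) (c x \in f x c) <= g x * #|C|.
  have E1 : \sum_(c : C) \sum_(a : 'I_q) (a \in f x c) <= g x * #|C|.
    rewrite mulnC -sum_nat_const; apply: leq_sum => c _.
    by rewrite -card_sum bnd.
  apply: leq_trans E1; rewrite leq_eqVlt; apply/orP; left; apply/eqP.
  have E2 : forall c a, (a \in f x c) = ((upd c x a) x \in f x (upd c x a)).
    move=> c a; rewrite ffunE eqxx (loc x (upd c x a) c) // => w xw.
    rewrite ffunE; case: eqP => // wx; by rewrite wx irr in xw.
  under [RHS]eq_bigr => c _ do under eq_bigr => a _ do rewrite E2.
  rewrite pair_big /=.
  pose phi := fun p : C * 'I_q => (upd p.1 x p.2, p.1 x).
  have phiK : involutive phi.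
    move=> [c a]; rewrite /phi /=; congr pair; last by rewrite ffunE eqxx.
    by apply/ffunP => y; rewrite !ffunE; case: eqP => // ->.
  rewrite (reindex_inj (inv_inj phiK)) /=.
  have updK : forall (c : C) a, upd (upd c x a) x (c x) = c.
    by move=> c a; apply/ffunP => y; rewrite !ffunE; case: eqP => // ->.
  under eq_bigr => p _ do rewrite updK.
  rewrite -(pair_big xpredT xpredT (fun (c : C) (a : 'I_q) => nat_of_bool (c x \in f x c))) /=.
  rewrite big_distrr /=; apply: eq_bigr => c _.
  by rewrite big_const_ord iter_addn_0 mulnC.
have tot : q * #|C| <= (\sum_x g x) * #|C|.
  apply: (@leq_trans (q * \sum_x \sum_(c : C) (c x \in f x c))).
    rewrite leq_mul2l; apply/orP; right.
    rewrite exchange_big /= -sum1_card; apply: leq_sum => c _.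
    have [x hx] := win c; by rewrite (bigD1 x) //= hx.
  by rewrite big_distrr big_distrl /=; apply: leq_sum => x _; apply: key.
have C0 : 0 < #|C| by rewrite card_ffun card_ord expn_gt0 q0.
by rewrite leq_pmul2r in tot.
Qed.
End Aux.
Arguments localP {T e q f}.
Arguments boundedP {T q g f}.
Arguments winsP {T q f}.

Section Main.
Variables (T : finType) (e : rel T) (v : T) (q : nat).

Definition ext (c' : {ffun {x | x != v} -> 'I_q}) (a : 'I_q) : {ffun T -> 'I_q} :=
  [ffun x => if (insub x : option {x | x != v}) is Some y then c' y else a].

Lemma ext_v c' a : ext c' a v = a.
Proof. by rewrite ffunE insubF // eqxx. Qed.

Lemma ext_val c' a (y : {x | x != v}) : ext c' a (val y) = c' y.
Proof. by rewrite ffunE valK. Qed.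

Lemma extE c' a b w : w != v -> ext c' a w = ext c' b w.
Proof. by move=> wv; rewrite -[w]/(val (exist _ w wv : {x | x != v})) !ext_val. Qed.

Lemma main_lemma (e_sym : symmetric e) (e_irr : irreflexive e)
  (g : T -> nat) (g_pos : forall x, 0 < g x)
  (g' : {x | x != v} -> nat) (g'_pos : forall x, 0 < g' x)
  (g'_eq : forall x : {x | x != v}, ~~ e v (val x) -> g' x = g (val x))
  (q0 : 0 < q) (nw : ~~ has_winning (del_rel e v) g' q)
  (hsum : (((g v)%:R : rat) / q%:R
           + \sum_(w : {x | x != v} | e v (val w)) (g (val w))%:R / (g' w).+1%:R
           < 1)%R) :
  ~~ has_winning e g q.
Proof.
apply/negP => /existsP [f /and3P [hl hb hw]].
have loc := localP hl; have bnd := boundedP hb; have win := winsP hw.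
pose N (y : {x | x != v}) c' (b : 'I_q) := #|[set a : 'I_q | b \in f (val y) (ext c' a)]|.
pose f' : {ffun {x | x != v} -> {ffun {ffun {x | x != v} -> 'I_q} -> {set 'I_q}}} :=
  [ffun y => [ffun c' => [set b | g (val y) * q < (g' y).+1 * N y c' b]]].
have hl' : strategy_local (del_rel e v) f'.
  apply/forallP => y; apply/forallP => c1; apply/forallP => c2; apply/implyP => /forallP H.
  rewrite !ffunE; apply/eqP/setP => b; rewrite !inE /N.
  have -> : [set a : 'I_q | b \in f (val y) (ext c1 a)] = [set a | b \in f (val y) (ext c2 a)].
    apply/setP => a; rewrite !inE (loc (val y) (ext c1 a) (ext c2 a)) // => w yw.
    have [->|wv] := eqVneq w v; first by rewrite !ext_v.
    rewrite -[w]/(val (exist _ w wv : {x | x != v})) !ext_val.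
    by apply/eqP; move: (H (exist _ w wv)) => /implyP; apply.
  by [].
have hb' : strategy_bounded g' f'.
  apply/forallP => y; apply/forallP => c'; rewrite !ffunE.
  set S := [set b | _].
  have sumN : \sum_b N y c' b <= g (val y) * q.
    rewrite /N; under eq_bigr => b _ do rewrite card_sum.
    under eq_bigr => b _ do under eq_bigr => a _ do rewrite inE.
    rewrite exchange_big /=.
    apply: (@leq_trans (\sum_(a : 'I_q) g (val y))); last first.
      by rewrite big_const_ord iter_addn_0 mulnC.
    apply: leq_sum => a _; by rewrite -card_sum bnd.
  have lo : #|S| * (g (val y) * q).+1 <= (g' y).+1 * (g (val y) * q).
    rewrite -sum_nat_const.
    apply: (@leq_trans (\sum_(b in S) (g' y).+1 * N y c' b)).
      by apply: leq_sum => b; rewrite inE.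
    apply: (@leq_trans (\sum_b (g' y).+1 * N y c' b)); last first.
      by rewrite -big_distrr /= leq_mul2l sumN orbT.
    rewrite [X in _ <= X](bigID (mem S)) /=; exact: leq_addr.
  have P0 : 0 < g (val y) * q by rewrite muln_gt0 g_pos q0.
  move: lo P0; set P := g (val y) * q; move=> lo P0.
  rewrite leqNgt; apply/negP => hS.
  have : (g' y).+1 * P.+1 <= #|S| * P.+1 by rewrite leq_mul2r hS orbT.
  move=> h2; have := leq_trans h2 lo; rewrite leq_mul2l /=; by rewrite ltnn.
have [c' hc'] : exists c' : {ffun {x | x != v} -> 'I_q}, forall y, c' y \notin f' y c'.
  have : ~~ strategy_wins f'.
    apply: contra nw => hw'; apply/existsP; exists f'; by rewrite hl' hb' hw'.
  by move=> /forallPn [c' /existsPn hc']; exists c'.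
pose A0 := [set a : 'I_q | a \in f v (ext c' a)].
pose Ay (y : {x | x != v}) := [set a : 'I_q | c' y \in f (val y) (ext c' a)].
pose a1 := Ordinal q0.
have hA0 : #|A0| <= g v.
  apply: leq_trans (bnd v (ext c' a1)); apply: subset_leq_card; apply/subsetP => a.
  rewrite inE (loc v (ext c' a) (ext c' a1)) // => w vw.
  apply: extE; apply/eqP => wv; by rewrite wv e_irr in vw.
have hAy y : (g' y).+1 * #|Ay y| <= g (val y) * q.
  by move: (hc' y); rewrite !ffunE inE -leqNgt.
have hAn y : ~~ e v (val y) -> #|Ay y| = 0.
  move=> nv; apply/eqP; rewrite cards_eq0; apply/eqP/setP => a; rewrite !inE; apply/negP => ha.
  have full : Ay y = setT.
    apply/setP => b; rewrite !inE (loc (val y) (ext c' b) (ext c' a)) // => w yw.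
    apply: extE; apply/eqP => wv; by rewrite wv e_sym (negbTE nv) in yw.
  have := hAy y; rewrite full cardsT card_ord g'_eq //.
  rewrite mulSn mulnC; have := q0; lia.
have [a ha] : exists a, (a \notin A0) && [forall y, a \notin Ay y].
  apply/existsP; apply/contraT => /existsPn hall.
  have cnt : q <= #|A0| + \sum_y #|Ay y|.
    rewrite card_sum; under eq_bigr => y _ do rewrite card_sum.
    rewrite exchange_big -big_split /=.
    apply: (@leq_trans (\sum_(a : 'I_q) 1)); first by rewrite big_const_ord iter_addn_0 mul1n.
    apply: leq_sum => a _; move: (hall a); rewrite negb_and negbK.
    case/orP => [-> // | /forallPn [y]]; rewrite negbK => hy.
    rewrite (bigD1 y) //= hy; lia.
  move: cnt; rewrite (bigID (fun y => e v (val y))) /=.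
  rewrite [X in _ + (_ + X)]big1 ?addn0; last by move=> y /hAn.
  move=> cnt.
  have : (((#|A0| + \sum_(y | e v (val y)) #|Ay y|)%N%:R : rat) <=
         q%:R * (((g v)%:R : rat) / q%:R
           + \sum_(w : {x | x != v} | e v (val w)) (g (val w))%:R / (g' w).+1%:R))%R.
    have qn0 : (q%:R : rat) != 0%R by rewrite pnatr_eq0 -lt0n.
    rewrite natrD natr_sum mulrDr mulrCA divff // mulr1 lerD ?ler_nat //.
    rewrite mulr_sumr; apply: ler_sum => y _.
    rewrite mulrA ler_pdivlMr ?ltr0n // -!natrM ler_nat mulnC [q * _]mulnC; exact: hAy.
  have qpos : ((0 : rat) < q%:R)%R by rewrite ltr0n.
  move=> h; have h2 := hsum; rewrite -(ltr_pM2l qpos) mulr1 in h2.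
  have := le_lt_trans h h2.
  by rewrite ltr_nat ltnNge cnt.
move: (win (ext c' a)) => [x hx]; move: ha => /andP [h0 /forallP hy].
have [xv|xv] := eqVneq x v.
  by subst x; rewrite ext_v in hx; move: h0; rewrite inE hx.
move: (hy (exist _ x xv)); rewrite inE /=.
by rewrite -[x]/(val (exist _ x xv : {x | x != v})) ext_val in hx; rewrite hx.
Qed.
End Main.

Theorem proposition2p1 (T : finType) (e : rel T)
  (e_sym : symmetric e) (e_irr : irreflexive e)
  (g : T -> nat) (g_pos : forall x, 0 < g x) (v : T)
  (g' : del_vertex v -> nat) (g'_pos : forall x, 0 < g' x)
  (g'_eq : forall x : del_vertex v, ~~ e v (val x) -> g' x = g (val x))
  (q : nat) (hq : HG (del_rel e v) g' < q)
  (hsum : (((g v)%:R : rat) / q%:R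
           + \sum_(w : del_vertex v | e v (val w)) (g (val w))%:R / (g' w).+1%:R
           < 1)%R) :
  HG e g < q.
Proof.
have q0 : 0 < q by case: q hq hsum.
rewrite /HG -(prednK q0) ltnS; apply/bigmax_leqP => i hwi.
rewrite -ltnS prednK //; rewrite ltnNge; apply/negP => qi.
have i0 : 0 < i by apply: leq_trans qi.
have irr' : irreflexive (del_rel e v) by move=> x; rewrite /del_rel e_irr.
have nw : ~~ has_winning (del_rel e v) g' i.
  apply/negP => hw'.
  have ub' : i <= \sum_x g' x.
    by move: hw' => /existsP [f' /and3P [h1 h2 h3]]; exact: (@ub _ _ _ _ f' irr' i0 h1 h2 h3).
  have := leq_bigmax_cond (P := fun j : 'I__ => has_winning (del_rel e v) g' j) (F := @nat_of_ord _) (Ordinal (ub' : i < (\sum_x g' x).+1)) hw'.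
  rewrite /HG in hq => /= hi; move: (leq_trans hq (leq_trans qi hi)); by rewrite ltnn.
have hsum' : (((g v)%:R : rat) / i%:R
           + \sum_(w : del_vertex v | e v (val w)) (g (val w))%:R / (g' w).+1%:R
           < 1)%R.
  apply: le_lt_trans hsum; rewrite lerD2r ler_wpM2l ?ler0n //.
  by rewrite lef_pV2 ?posrE ?ltr0n // ler_nat.
by move: hwi; apply/negP; exact: (@main_lemma _ _ _ _ e_sym e_irr g g_pos g' g'_pos g'_eq i0 nw hsum').
Qed.
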